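(* Let $G=(V,E)$ be a directed graph, $s\neq t$ vertices and $k\ge 2$ an integer. For any simple path $p^*(s,t)$ from $s$ to $t$ of length $l\le k$, its first two edges and its last two edges are definite edges.
   Context: A path from $x$ to $y$ in $G$ is a vertex sequence $x=v_0,\dots,v_m=y$ with $(v_{i-1},v_i)\in E$; its length is $m$ and $V(p)$ is its vertex set. A simple path has no repeated vertex. For a vertex $u$ and integer $l\ge 0$, $EV^*_l(s,u)$ exists iff there is at least one simple path from $s$ to $u$ of length at most $l$ not containing $t$, and then $EV^*_l(s,u)$ is the intersection of $V(p)$ over all such paths. Symmetrically, $EV^*_l(v,t)$ exists iff there is at least one simple path from $v$ to $t$ of length at most $l$ not containing $s$, and then it is the intersection of $V(p)$ over all such paths. An edge $e(u,v)\in E$ is a definite edge (for $s,t,k$) if at least one of the following holds: (a) $u=s$ and $EV^*_{k-1}(v,t)$ exists; (b) $v=t$ and $EV^*_{k-1}(s,u)$ exists; (c) $EV^*_1(s,u)$ and $EV^*_{k-2}(v,t)$ exist and $u\notin EV^*_{k-2}(v,t)$; (d) $EV^*_1(v,t)$ and $EV^*_{k-2}(s,u)$ exist and $v\notin EV^*_{k-2}(s,u)$. *)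

(* Defs.v *)
From mathcomp Require Import all_boot.
Set Implicit Arguments. Unset Strict Implicit. Unset Printing Implicit Defensive.

(* A path from x to y is the vertex sequence x :: p with consecutive pairs in E
   and last vertex y; its length is size p (number of edges); its vertex set is
   the elements of x :: p. *)

Section Graph.
Variables (V : eqType) (E : rel V).

Definition is_path (x y : V) (p : seq V) : Prop :=
  path E x p /\ last x p = y.

Definition simple_path (x y : V) (p : seq V) : Prop :=
  is_path x y p /\ uniq (x :: p).

(* Candidate paths for EV*_l(s,u): simple paths from s to u, length <= l,
   not containing t. *)
Definition EVs_cand (s t : V) (l : nat) (u : V) (p : seq V) : Prop :=
  simple_path s u p /\ size p <= l /\ t \notin (s :: p).

(* Candidate paths for EV*_l(v,t): simple paths from v to t, length <= l,
   not containing s. *)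
Definition EVt_cand (s t : V) (l : nat) (v : V) (p : seq V) : Prop :=
  simple_path v t p /\ size p <= l /\ s \notin (v :: p).

Definition EVs_exists s t l u : Prop := exists p, EVs_cand s t l u p.
Definition EVt_exists s t l v : Prop := exists p, EVt_cand s t l v p.

(* membership in the intersection of the vertex sets of all candidate paths
   (only meaningful together with the existence predicate) *)
Definition in_EVs s t l u (w : V) : Prop :=
  forall p, EVs_cand s t l u p -> w \in s :: p.
Definition in_EVt s t l v (w : V) : Prop :=
  forall p, EVt_cand s t l v p -> w \in v :: p.

Definition definite_edge (s t : V) (k : nat) (u v : V) : Prop :=
  E u v /\
  [\/ u = s /\ EVt_exists s t k.-1 v,
      v = t /\ EVs_exists s t k.-1 u,
      [/\ EVs_exists s t 1 u, EVt_exists s t (k - 2) v & ~ in_EVt s t (k - 2) v u]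
    | [/\ EVt_exists s t 1 v, EVs_exists s t (k - 2) u & ~ in_EVs s t (k - 2) u v]].

End Graph.

(* Main.v *)
Require Import Defs.
From mathcomp Require Import all_boot.
From mathcomp Require Import zify.

Section H.
Variables (V : eqType) (E : rel V).

Lemma last_take_nth (s : V) p j : j <= size p -> last s (take j p) = nth s (s :: p) j.
Proof.
elim: p s j => [|a p IH] s [|j] //= hj.
rewrite IH //; apply: set_nth_default => /=; lia.
Qed.

Lemma disj (q : seq V) a w : uniq q -> w \in drop a q -> w \notin take a q.
Proof.
rewrite -{1}(cat_take_drop a q) cat_uniq => /and3P[_ /hasPn H _] /H //.
Qed.

Lemma edge_nth (s : V) p j : path E s p -> j < size p ->
  E (nth s (s :: p) j) (nth s (s :: p) j.+1).
Proof.
move=> hp hj; have : path E s (take j p ++ drop j p) by rewrite cat_take_drop.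
rewrite cat_path => /andP[_].
rewrite (drop_nth s hj) last_take_nth; last lia.
move=> /=. by case/andP.
Qed.

Lemma pre_cand (s t : V) p j l : simple_path E s t p -> j < size p -> j <= l ->
  EVs_cand E s t l (nth s (s :: p) j) (take j p).
Proof.
move=> [[hp hl] hu] hj hjl.
have hj' : j <= size p by lia.
split; [split; [split|]|split].
- have : path E s (take j p ++ drop j p) by rewrite cat_take_drop.
  by rewrite cat_path => /andP[].
- exact: last_take_nth.
- by have := take_uniq j.+1 hu.
- rewrite size_takel //.
- have -> : s :: take j p = take j.+1 (s :: p) by [].
  apply: disj => //.
  rewrite /= -hl -[in X in last s X](cat_take_drop j p) last_cat.
  case E1: (drop j p) => [|a r].
  + move: E1 => /eqP; rewrite -size_eq0 size_drop; lia.
  + by rewrite /= mem_last.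
Qed.

Lemma suf_cand (s t : V) p j l : simple_path E s t p -> 1 <= j <= size p -> size p - j <= l ->
  EVt_cand E s t l (nth s (s :: p) j) (drop j p).
Proof.
move=> [[hp hl] hu] /andP[hj1 hj] hjl.
have hdq : drop j (s :: p) = nth s (s :: p) j :: drop j p.
  by rewrite (drop_nth s) //=; lia.
split; [split; [split|]|split].
- have : path E s (take j p ++ drop j p) by rewrite cat_take_drop.
  rewrite cat_path => /andP[_].
  by rewrite last_take_nth.
- by rewrite -hl -[in RHS](cat_take_drop j p) last_cat last_take_nth.
- by rewrite -hdq; apply: drop_uniq.
- by rewrite size_drop.
- rewrite -hdq; apply/negP => /(disj _ _ _ hu); apply/negP/negPn.
  by case: j hj1 {hjl hj hdq} => [|j] //= _; rewrite inE eqxx.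
Qed.

End H.
Arguments disj {V q a w}.
Arguments edge_nth {V E s p j}.
Arguments pre_cand {V E s t p j} l.
Arguments suf_cand {V E s t p j} l.

Theorem theorem4p9 (V : eqType) (E : rel V) (s t : V) (k : nat) (p : seq V) :
  s != t -> 2 <= k ->
  simple_path E s t p -> size p <= k ->
  forall i : nat, 1 <= i <= size p -> (i <= 2) || (size p - 1 <= i) ->
    definite_edge E s t k (nth s (s :: p) i.-1) (nth s (s :: p) i).
Proof.
move=> hst hk hsp hsz i /andP[hi1 hin] hc.
have hsp' := hsp; move: hsp' => [[hp hl] hu].
split.
  have := edge_nth hp (_ : i.-1 < size p); rewrite prednK //; apply; lia.
have [hi|hi] := eqVneq i 1.
  subst i; apply: Or41; split => //.
  exists (drop 1 p); apply: suf_cand => //; lia.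
have [hiN|hiN] := eqVneq i (size p).
  apply: Or42; split.
    by rewrite hiN -last_take_nth // take_size.
  exists (take i.-1 p); apply: pre_cand => //; lia.
have hq : uniq (s :: p) := hu.
case/orP: hc => hc.
  have -> : i = 2 by lia.
  apply: Or43; split.
  - exists (take 1 p); apply: pre_cand => //; lia.
  - exists (drop 2 p); apply: suf_cand => //; lia.
  - move=> H; have h1 : 1 <= 2 <= size p by lia.
    have h2 : size p - 2 <= k - 2 by lia.
    have := H _ (suf_cand (k - 2) hsp h1 h2).
    have hdq : drop 2 (s :: p) = nth s (s :: p) 2 :: drop 2 p.
      by rewrite (drop_nth s) //=; lia.
    rewrite -hdq => /(disj hq); apply/negP/negPn.
    have e : nth s (s :: p) 1 = nth s (take 2 (s :: p)) 1 by rewrite nth_take.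
    rewrite [2.-1]/= e; apply: mem_nth; rewrite size_takel //=; lia.
apply: Or44; split.
- exists (drop i p); apply: suf_cand => //; lia.
- exists (take i.-1 p); apply: pre_cand => //; lia.
- move=> H; have h1 : i.-1 < size p by lia.
  have h2 : i.-1 <= k - 2 by lia.
  have := H _ (pre_cand (k - 2) hsp h1 h2).
  have -> : s :: take i.-1 p = take i (s :: p) by case: i hi1 {hi hiN hc H hin h1 h2} => [|i].
  apply/negP; apply: (disj hq).
  rewrite (drop_nth s) /=; [by rewrite inE eqxx|lia].
Qed.
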